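(* The graphs $\mathbf{X}_6$ and $\mathbf{X}_7$ are not block decomposable. In particular, they are not of geometric type (they do not arise from triangulations of bordered oriented surfaces with marked points).
   Context: A graph here is a finite directed multigraph with no loops and no oriented $2$-cycles. $\mathbf{X}_6$: vertices $x,w,y_1,z_1,y_2,z_2$; for $i=1,2$: two arrows $y_i\to z_i$, one arrow $z_i\to x$, one arrow $x\to y_i$; plus one arrow $w\to x$. $\mathbf{X}_7$: vertices $x,y_i,z_i$ ($i=1,2,3$); for each $i$: two arrows $y_i\to z_i$, one arrow $z_i\to x$, one arrow $x\to y_i$. Blocks: each block is a small graph whose vertices are marked either open or closed; all arrows single. I: open $a\to$ open $b$. II: open vertices $a,b,c$ with $a\to b\to c\to a$. IIIa: open $o$ and closed $s_1,s_2$ with $s_1\to o$, $s_2\to o$. IIIb: open $o$ and closed $s_1,s_2$ with $o\to s_1$, $o\to s_2$. IV: open $l,r$, closed $t,s$, arrows $l\to t$, $t\to r$, $l\to s$, $s\to r$, $r\to l$. V: open $c$, closed $A,B,C,D$, arrows $A\to c$, $c\to B$, $B\to A$, $c\to C$, $C\to D$, $D\to c$, $B\to D$, $C\to A$. A graph is block decomposable if it can be obtained as follows: take a disjoint union of finitely many blocks (each type may occur any number of times), choose a partial matching of the open vertices in which no vertex is matched to a vertex of the same block, identify matched vertices, and then, whenever two vertices $u,v$ have an arrow $u\to v$ and an arrow $v\to u$, delete both arrows (repeating until no such pairs remain). A graph is called of geometric type if it comes from a triangulation of a bordered oriented surface with marked points in the sense of Fomin–Shapiro–Thurston; by their work this is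 equivalent to being block decomposable. *)

(* Defs.v *)
From mathcomp Require Import all_boot.
Set Implicit Arguments. Unset Strict Implicit. Unset Printing Implicit Defensive.

(** A graph: finite vertex type, [arr u v] = number of arrows u -> v. *)
Record graph := Graph { gV : finType; garr : gV -> gV -> nat }.

Definition is_graph (G : graph) : Prop :=
  (forall v : gV G, garr v v = 0) /\ (forall u v : gV G, garr u v = 0 \/ garr v u = 0).

Inductive btype := BI | BII | BIIIa | BIIIb | BIV | BV.

Definition bsize (k : btype) : nat :=
  match k with BI => 2 | BII => 3 | BIIIa => 3 | BIIIb => 3 | BIV => 4 | BV => 5 end.

(* I: a=0,b=1.  II: a=0,b=1,c=2.  IIIa/IIIb: o=0,s1=1,s2=2.
   IV: l=0,r=1,t=2,s=3.  V: c=0,A=1,B=2,C=3,D=4. *)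
Definition bopen (k : btype) (i : nat) : bool :=
  match k with
  | BI | BII => true
  | BIIIa | BIIIb => i == 0
  | BIV => i < 2
  | BV => i == 0
  end.

Definition barrows (k : btype) : seq (nat * nat) :=
  match k with
  | BI => [:: (0,1)]
  | BII => [:: (0,1); (1,2); (2,0)]
  | BIIIa => [:: (1,0); (2,0)]
  | BIIIb => [:: (0,1); (0,2)]
  | BIV => [:: (0,2); (2,1); (0,3); (3,1); (1,0)]
  | BV => [:: (1,0); (0,2); (2,1); (0,3); (3,4); (4,0); (2,4); (3,1)]
  end.

Definition barr (k : btype) (i j : nat) : nat := count_mem (i, j) (barrows k).

Definition uvert (n : nat) (t : 'I_n -> btype) : finType :=
  {i : 'I_n & 'I_(bsize (t i))}.

Definition uopen n (t : 'I_n -> btype) (p : uvert t) : bool :=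
  bopen (t (tag p)) (val (tagged p)).

Definition uarr n (t : 'I_n -> btype) (p q : uvert t) : nat :=
  if tag p == tag q then barr (t (tag p)) (val (tagged p)) (val (tagged q)) else 0.

(** G is block decomposable: there are finitely many blocks (types t) and a
    surjective identification map f from the disjoint union onto the vertices
    of G, whose fibres have size 1 or 2, a fibre of size 2 consisting of two
    open vertices from different blocks (this is exactly the quotient by a
    partial matching of open vertices, up to isomorphism); and the arrows of G
    are those of the identified graph after cancelling all pairs of opposite
    arrows, i.e. arr u v = (#arrows u->v) - (#arrows v->u) (truncated). *)
Definition block_decomposable (G : graph) : Prop :=
  exists (n : nat) (t : 'I_n -> btype) (f : uvert t -> gV G),
    [/\ forall x : gV G, 0 < #|[set p | f p == x]| <= 2,
        forall p q : uvert t, p != q -> f p = f q ->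
          [&& uopen p, uopen q & tag p != tag q]
      & forall u v : gV G,
          garr u v =
            (\sum_(p | f p == u) \sum_(q | f q == v) uarr p q) -
            (\sum_(p | f p == v) \sum_(q | f q == u) uarr p q)].

(** X6: x=0, w=1, y1=2, z1=3, y2=4, z2=5. *)
Definition arrX6 (a b : 'I_6) : nat :=
  match val a, val b with
  | 2, 3 => 2 | 4, 5 => 2
  | 3, 0 => 1 | 5, 0 => 1
  | 0, 2 => 1 | 0, 4 => 1
  | 1, 0 => 1
  | _, _ => 0
  end.
Definition X6 : graph := @Graph 'I_6 arrX6.

(** X7: x=0, y1=1, z1=2, y2=3, z2=4, y3=5, z3=6. *)
Definition arrX7 (a b : 'I_7) : nat :=
  match val a, val b with
  | 1, 2 => 2 | 3, 4 => 2 | 5, 6 => 2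
  | 2, 0 => 1 | 4, 0 => 1 | 6, 0 => 1
  | 0, 1 => 1 | 0, 3 => 1 | 0, 5 => 1
  | _, _ => 0
  end.
Definition X7 : graph := @Graph 'I_7 arrX7.

(* Main.v *)
Require Import Defs.
From mathcomp Require Import all_boot.
From mathcomp Require Import zify.
Set Implicit Arguments. Unset Strict Implicit. Unset Printing Implicit Defensive.

Lemma sum_gt0_ex (I : finType) (P : pred I) (F : I -> nat) :
  0 < \sum_(i | P i) F i -> exists i, P i /\ 0 < F i.
Proof.
move=> H; case: (pickP [pred i | P i && (0 < F i)]) => [i /= /andP[Pi Fi]|none].
  by exists i.
move: H; rewrite big1 // => i Pi; move: (none i) => /=; rewrite Pi /=.
by move/negbT; rewrite -leqNgt leqn0 => /eqP.
Qed.

Lemma two_pos (I : finType) (P : pred I) (F : I -> nat) :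
  (forall i, F i <= 1) -> 1 < \sum_(i | P i) F i ->
  exists i j, [/\ P i, P j, i != j, 0 < F i & 0 < F j].
Proof.
move=> le1 H.
have [i [Pi Fi]] := sum_gt0_ex (ltnW H).
move: H; rewrite (bigD1 i) //= => H.
have H2 : 0 < \sum_(j | P j && (j != i)) F j.
  have := le1 i; lia.
have [j [/andP[Pj ji] Fj]] := sum_gt0_ex H2.
by exists i, j; split=> //; rewrite eq_sym.
Qed.

Definition Dec (G : graph) n (t : 'I_n -> btype) (f : uvert t -> gV G) :=
  [/\ forall x : gV G, 0 < #|[set p | f p == x]| <= 2,
        forall p q : uvert t, p != q -> f p = f q ->
          [&& uopen p, uopen q & tag p != tag q]
      & forall u v : gV G,
          garr u v =
            (\sum_(p | f p == u) \sum_(q | f q == v) uarr p q) -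
            (\sum_(p | f p == v) \sum_(q | f q == u) uarr p q)].

Lemma uarr_le1 n (t : 'I_n -> btype) (p q : uvert t) : uarr p q <= 1.
Proof.
rewrite /uarr; case: ifP => // _.
have U : forall k, uniq (barrows k) by case.
by rewrite /barr count_uniq_mem // leq_b1.
Qed.

Lemma uarr_tag n (t : 'I_n -> btype) (p q : uvert t) : 0 < uarr p q -> tag p = tag q.
Proof. by rewrite /uarr; case: eqP. Qed.

Lemma fib_ex G n t f (D : @Dec G n t f) u v :
  0 < garr u v -> exists p q, [/\ f p = u, f q = v & 0 < uarr p q].
Proof.
case: D => _ _ H3; rewrite H3 => H.
have H' : 0 < \sum_(p | f p == u) \sum_(q | f q == v) uarr p q by lia.
have [p [/eqP fp Hp]] := sum_gt0_ex H'.
have [q [/eqP fq Hq]] := sum_gt0_ex Hp.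
by exists p, q.
Qed.

Lemma fib_le2 G n t f (D : @Dec G n t f) u a b c :
  f a = u -> f b = u -> f c = u -> a != b -> b != c -> c != a -> False.
Proof.
case: D => H1 _ _ fa fb fc ab bc ca.
have := H1 u; case/andP => _; rewrite leqNgt => /negP; apply.
apply/card_gt2P; exists a, b, c; split; split => //; by rewrite inE; apply/eqP.
Qed.

Lemma fib3 G n t f (D : @Dec G n t f) u a b c :
  f a = u -> f b = u -> f c = u -> a != b -> c = a \/ c = b.
Proof.
move=> fa fb fc ab.
case: (eqVneq c a) => [->|ca]; first by left.
case: (eqVneq c b) => [->|cb]; first by right.
by exfalso; apply: (fib_le2 D fa fb fc) => //; rewrite eq_sym.
Qed.

Lemma inner_le1 G n t f (D : @Dec G n t f) p v :
  \sum_(q | f q == v) uarr p q <= 1.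
Proof.
case: D => _ H2 _.
rewrite leqNgt; apply/negP => H.
have [q1 [q2 [/eqP f1 /eqP f2 ne u1 u2]]] := two_pos (@uarr_le1 _ _ p) H.
have := H2 _ _ ne; rewrite f1 f2 => /(_ erefl) /and3P[_ _].
by rewrite -(uarr_tag u1) -(uarr_tag u2) eqxx.
Qed.

Lemma tri G n t f (D : @Dec G n t f) x y z :
  garr y z = 2 -> 0 < garr x y ->
  exists p q r, [/\ tag q = tag p, tag r = tag p, uopen p & uopen q] /\
                    [/\ f p = y, f q = z & f r = x].
Proof.
move=> E Exy.
have D' := D; case: D' => _ H2 H3.
have S2 : 1 < \sum_(p | f p == y) \sum_(q | f q == z) uarr p q.
  by move: E; rewrite H3; lia.
have [p1 [p2 [/eqP fp1 /eqP fp2 ne T1 T2]]] := two_pos (fun p => inner_le1 D p z) S2.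
have [q1 [/eqP fq1 U1]] := sum_gt0_ex T1.
have [q2 [/eqP fq2 U2]] := sum_gt0_ex T2.
have tq1 := uarr_tag U1; have tq2 := uarr_tag U2.
have := H2 _ _ ne; rewrite fp1 fp2 => /(_ erefl) /and3P[o1 o2 tne].
have qne : q1 != q2 by apply: contra tne => /eqP E'; rewrite tq1 tq2 E'.
have := H2 _ _ qne; rewrite fq1 fq2 => /(_ erefl) /and3P[oq1 oq2 _].
have [r [p [fr fp U]]] := fib_ex D Exy.
have tr := uarr_tag U.
case: (fib3 D fp1 fp2 fp ne) => Ep; subst p.
  by exists p1, q1, r; split; split.
by exists p2, q2, r; split; split.
Qed.

Lemma bl_nat k (i j l m : nat) : i < bsize k -> j < bsize k -> l < bsize k -> m < bsize k ->
  i != j -> i != l -> i != m -> j != l -> j != m -> l != m ->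
  bopen k i -> bopen k j -> bopen k l -> False.
Proof. case: k => /=; lia. Qed.

Lemma block4 n (t : 'I_n -> btype) (a b c d : uvert t) :
  tag b = tag a -> tag c = tag a -> tag d = tag a ->
  a != b -> a != c -> a != d -> b != c -> b != d -> c != d ->
  uopen a -> uopen b -> uopen c -> False.
Proof.
case: a b c d => [ia a'] [ib b'] [ic c'] [id d'] /= Eb Ec Ed; subst ib ic id.
have ne : forall x y : 'I_(bsize (t ia)),
    (existT _ ia x : uvert t) != existT _ ia y -> val x != val y.
  by move=> x y; apply: contra => /eqP/val_inj ->.
move=> /ne ab /ne ac /ne ad /ne bc /ne bd /ne cd.
rewrite /uopen /= => oa ob oc.
exact: (bl_nat (ltn_ord a') (ltn_ord b') (ltn_ord c') (ltn_ord d') ab ac ad bc bd cd oa ob oc).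
Qed.

Lemma neq_img (G : graph) (T : finType) (f : T -> gV G) a b u v :
  f a = u -> f b = v -> u != v -> a != b.
Proof. by move=> <- <-; apply: contra => /eqP ->. Qed.

Lemma X7_nd : ~ block_decomposable X7.
Proof.
move=> [n [t [f D]]].
have D' : Dec f by [].
pose o k (h : k < 7) : 'I_7 := Ordinal h.
have [p1 [q1 [r1 [[tq1 tr1 op1 oq1] [fp1 fq1 fr1]]]]] :=
  tri D' (x := o 0 isT) (y := o 1 isT) (z := o 2 isT) erefl isT.
have [p2 [q2 [r2 [[tq2 tr2 op2 oq2] [fp2 fq2 fr2]]]]] :=
  tri D' (x := o 0 isT) (y := o 3 isT) (z := o 4 isT) erefl isT.
have [p3 [q3 [r3 [[tq3 tr3 op3 oq3] [fp3 fq3 fr3]]]]] :=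
  tri D' (x := o 0 isT) (y := o 5 isT) (z := o 6 isT) erefl isT.
have dist : forall (pa qa ra pb qb rb : uvert t) (ya za yb zb : 'I_7),
    tag qa = tag pa -> tag ra = tag pa -> uopen pa -> uopen qa ->
    tag qb = tag pb -> tag rb = tag pb -> uopen pb -> uopen qb ->
    f pa = ya -> f qa = za -> f pb = yb -> f qb = zb ->
    ya != za -> ya != yb -> ya != zb -> za != yb -> za != zb -> yb != zb ->
    ra != rb.
  move=> pa qa ra pb qb rb ya za yb zb tqa tra opa oqa tqb trb opb oqb fpa fqa fpb fqb
    n1 n2 n3 n4 n5 n6.
  apply/negP => /eqP E.
  apply: (block4 (a := pa) (b := qa) (c := pb) (d := qb)) => //.
  - by rewrite -trb -E tra.
  - by rewrite tqb -trb -E tra.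
  - exact: neq_img fpa fqa n1.
  - exact: neq_img fpa fpb n2.
  - exact: neq_img fpa fqb n3.
  - exact: neq_img fqa fpb n4.
  - exact: neq_img fqa fqb n5.
  - exact: neq_img fpb fqb n6.
have n12 : r1 != r2 by apply: (dist _ _ _ _ _ _ _ _ _ _ tq1 tr1 op1 oq1 tq2 tr2 op2 oq2 fp1 fq1 fp2 fq2).
have n23 : r2 != r3 by apply: (dist _ _ _ _ _ _ _ _ _ _ tq2 tr2 op2 oq2 tq3 tr3 op3 oq3 fp2 fq2 fp3 fq3).
have n31 : r3 != r1 by apply: (dist _ _ _ _ _ _ _ _ _ _ tq3 tr3 op3 oq3 tq1 tr1 op1 oq1 fp3 fq3 fp1 fq1).
exact: (fib_le2 D' fr1 fr2 fr3 n12 n23 n31).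
Qed.

Lemma X6_nd : ~ block_decomposable X6.
Proof.
move=> [n [t [f D]]].
have D' : Dec f by [].
have D2 := D'; case: D2 => _ H2 _.
pose o k (h : k < 6) : 'I_6 := Ordinal h.
have [p1 [q1 [r1 [[tq1 tr1 op1 oq1] [fp1 fq1 fr1]]]]] :=
  tri D' (x := o 0 isT) (y := o 2 isT) (z := o 3 isT) erefl isT.
have [p2 [q2 [r2 [[tq2 tr2 op2 oq2] [fp2 fq2 fr2]]]]] :=
  tri D' (x := o 0 isT) (y := o 4 isT) (z := o 5 isT) erefl isT.
have n12 : r1 != r2.
  apply/negP => /eqP E.
  apply: (block4 (a := p1) (b := q1) (c := p2) (d := q2)) => //.
  - by rewrite -tr2 -E tr1.
  - by rewrite tq2 -tr2 -E tr1.
  - exact: neq_img fp1 fq1 isT.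
  - exact: neq_img fp1 fp2 isT.
  - exact: neq_img fp1 fq2 isT.
  - exact: neq_img fq1 fp2 isT.
  - exact: neq_img fq1 fq2 isT.
  - exact: neq_img fp2 fq2 isT.
have := H2 _ _ n12; rewrite fr1 fr2 => /(_ erefl) /and3P[or1 or2 _].
have [s [r [fs fr U]]] := fib_ex D' (u := o 1 isT) (v := o 0 isT) isT.
have ts := uarr_tag U.
case: (fib3 D' fr1 fr2 fr n12) => Er; subst r.
- apply: (block4 (a := p1) (b := q1) (c := r1) (d := s)) => //.
  + by rewrite ts tr1.
  + exact: neq_img fp1 fq1 isT.
  + exact: neq_img fp1 fr1 isT.
  + exact: neq_img fp1 fs isT.
  + exact: neq_img fq1 fr1 isT.
  + exact: neq_img fq1 fs isT.
  + exact: neq_img fr1 fs isT.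
- apply: (block4 (a := p2) (b := q2) (c := r2) (d := s)) => //.
  + by rewrite ts tr2.
  + exact: neq_img fp2 fq2 isT.
  + exact: neq_img fp2 fr2 isT.
  + exact: neq_img fp2 fs isT.
  + exact: neq_img fq2 fr2 isT.
  + exact: neq_img fq2 fs isT.
  + exact: neq_img fr2 fs isT.
Qed.

Theorem mainTheorem3 :
  ~ block_decomposable X6 /\ ~ block_decomposable X7.
Proof. exact: (conj X6_nd X7_nd). Qed.
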